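(* Let $G$ be a finite group and $H$ a normal subgroup of $G$ containing $G'$ such that $|H|$ divides $[G:H]$. Then the square \[ \begin{array}{ccc} G/H & \xrightarrow{\ \widetilde{\operatorname{Ver}}\ } & H/H'\\ \downarrow{\scriptstyle \delta|_H} & & \downarrow{\scriptstyle\delta}\\ \dfrac{I_G/I_G^2}{\delta(H/G')} & \xrightarrow{\ S'\ } & \dfrac{I_H+I_GI_H}{I_GI_H} \end{array} \] commutes.
   Context: $I_G$ is the augmentation ideal of $\mathbb{Z}[G]$ (kernel of $\sum n_\sigma\sigma\mapsto\sum n_\sigma$), similarly $I_H\subseteq I_G$. $\delta\colon G/G'\to I_G/I_G^2$, $\sigma G'\mapsto(\sigma-1)+I_G^2$, and $\delta\colon H/H'\to(I_H+I_GI_H)/I_GI_H$, $hH'\mapsto(h-1)+I_GI_H$, are the canonical isomorphisms. $\delta|_H\colon G/H\to(I_G/I_G^2)/\delta(H/G')$ is the isomorphism induced by $\delta$ via $G/H\cong(G/G')/(H/G')$. With $g_1,\dots,g_n$ coset representatives of $H$ in $G$, $S\colon I_G/I_G^2\to(I_H+I_GI_H)/I_GI_H$ is $S(x)=x\cdot(g_1+\cdots+g_n)\bmod I_GI_H$, and $S'$ is the induced map on $(I_G/I_G^2)/\delta(H/G')$, $S'([x])=S(x)$. The transfer $\operatorname{Ver}(G\to H)\colon G/G'\to H/H'$ is induced by $g\mapsto\prod_i\phi(gg_i)^{-1}gg_i$ where $\phi(g)=g_k$ if $g\in g_kH$; $\widetilde{\operatorname{Ver}}\colon G/H\to H/H'$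 is the map it induces (well defined when $\operatorname{Ver}(G\to H)$ sends $H$ into $H'$). *)

(* Defs.v *)
From HB Require Import structures.
From mathcomp Require Import all_boot all_order all_algebra all_fingroup all_solvable.
Set Implicit Arguments. Unset Strict Implicit. Unset Printing Implicit Defensive.
Import GRing.Theory.

(* The integral group ring Z[gT] of the ambient finite group type gT, realised
   as finitely supported integer-valued functions on gT (all functions, gT being
   finite), with pointwise addition and convolution product.  Z[G] for a
   subgroup G is the set of elements supported in G. *)
Definition zg (gT : finGroupType) := {ffun gT -> int}.

Section GroupRing.
Variable gT : finGroupType.
Local Open Scope ring_scope.

Definition gel (x : gT) : zg gT := [ffun y => ((y == x) : nat)%:Z].

Definition gmul (a b : zg gT) : zg gT :=
  [ffun z => \sum_(x : gT) a x * b (x^-1 * z)%g].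

Definition supported (A : {set gT}) (a : zg gT) : bool :=
  [forall x, (x \notin A) ==> (a x == 0)].

Definition aug_ideal (A : {set gT}) (a : zg gT) : bool :=
  supported A a && (\sum_(x : gT) a x == 0).

Definition in_prod_ideal (P Q : zg gT -> bool) (a : zg gT) : Prop :=
  exists s : seq (zg gT * zg gT),
    all (fun pq => P pq.1 && Q pq.2) s /\ a = \sum_(pq <- s) gmul pq.1 pq.2.

Definition coset_rep (X H : {set gT}) (g : gT) : gT :=
  transversal_repr 1%g X (g *: H)%g.

Definition Ver (X H : {set gT}) (g : gT) : gT :=
  (\prod_(x in X) ((coset_rep X H (g * x))^-1 * (g * x)))%g.

End GroupRing.

(* Main.v *)
Require Import Defs.
From HB Require Import structures.
From mathcomp Require Import all_boot all_order all_algebra all_fingroup all_solvable.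
Import GRing.Theory.
Local Open Scope ring_scope.



Section Alg.
Variable gT : finGroupType.
Implicit Types a b c : zg gT.
Implicit Types x y z : gT.


Lemma gmulDl a b c : gmul (a + b) c = gmul a c + gmul b c.
Proof. by apply/ffunP=> z; rewrite !ffunE -big_split; apply: eq_bigr=> x _; rewrite !ffunE mulrDl. Qed.
Lemma gmulDr a b c : gmul a (b + c) = gmul a b + gmul a c.
Proof. by apply/ffunP=> z; rewrite !ffunE -big_split; apply: eq_bigr=> x _; rewrite !ffunE mulrDr. Qed.
Lemma gmulNl a b : gmul (- a) b = - gmul a b.
Proof. by apply/ffunP=> z; rewrite !ffunE -sumrN; apply: eq_bigr=> x _; rewrite !ffunE mulNr. Qed.
Lemma gmulNr a b : gmul a (- b) = - gmul a b.
Proof. by apply/ffunP=> z; rewrite !ffunE -sumrN; apply: eq_bigr=> x _; rewrite !ffunE mulrN. Qed.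
Lemma gmul0r b : gmul 0 b = 0.
Proof. by apply/ffunP=> z; rewrite !ffunE big1 // => x _; rewrite ffunE mul0r. Qed.
Lemma gmulBl a b c : gmul (a - b) c = gmul a c - gmul b c.
Proof. by rewrite gmulDl gmulNl. Qed.
Lemma gmulBr a b c : gmul a (b - c) = gmul a b - gmul a c.
Proof. by rewrite gmulDr gmulNr. Qed.
Lemma gmul0 a : gmul a 0 = 0.
Proof. by apply/ffunP=> z; rewrite !ffunE big1 // => x _; rewrite ffunE mulr0. Qed.
Lemma gmul_sumr a (I : Type) (r : seq I) (P : pred I) (F : I -> zg gT) :
  gmul a (\sum_(i <- r | P i) F i) = \sum_(i <- r | P i) gmul a (F i).
Proof. exact: (big_morph (gmul a) (gmulDr a) (gmul0 a)). Qed.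

Lemma gmul_gel x y : gmul (gel x) (gel y) = gel (x * y)%g.
Proof.
apply/ffunP=> z; rewrite !ffunE (bigD1 x) //= big1 => [|w /negbTE wx]; last first.
  by rewrite !ffunE wx mul0r.
rewrite !ffunE eqxx mul1r addr0.
have -> : ((x^-1 * z)%g == y) = (z == (x * y)%g).
  apply/eqP/eqP=> [<-|->]; by rewrite ?mulKVg ?mulKg.
by [].
Qed.

Lemma zmod_id (V : zmodType) (a b c d : V) :
  a - d = (a - b - (c - d)) + (b - d) + (c - d).
Proof. by rewrite addrAC subrK addrA subrK. Qed.

Lemma gel_mulE x y : gel (x * y)%g - gel 1 =
  gmul (gel x - gel 1) (gel y - gel 1) + (gel x - gel 1) + (gel y - gel 1).
Proof.
rewrite gmulBl !gmulBr !gmul_gel !mul1g !mulg1.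
exact: zmod_id.
Qed.

Lemma gel_mulE2 x y : gel (x * y)%g - gel x =
  gmul (gel x - gel 1) (gel y - gel 1) + (gel y - gel 1).
Proof.
rewrite gmulBl !gmulBr !gmul_gel !mul1g !mulg1.
by rewrite subrK.
Qed.
End Alg.



Section Ideal.
Variable gT : finGroupType.
Variables G H : {set gT}.
Implicit Types a b c : zg gT.
Implicit Types x y z : gT.
Let P := in_prod_ideal (aug_ideal G) (aug_ideal H).

Lemma P0 : P 0.
Proof. by exists [::]; rewrite big_nil. Qed.

Lemma PD a b : P a -> P b -> P (a + b).
Proof.
move=> [s [hs ->]] [t [ht ->]]; exists (s ++ t).
by rewrite all_cat hs ht big_cat.
Qed.

Lemma aug_opp A a : aug_ideal A a -> aug_ideal A (- a).
Proof.
case/andP=> /forallP sa /eqP s0; apply/andP; split.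
  apply/forallP=> x; apply/implyP=> xA; rewrite ffunE oppr_eq0.
  exact: (implyP (sa x)).
by rewrite (eq_bigr (fun x => - a x)) ?sumrN ?s0 ?oppr0 // => x _; rewrite ffunE.
Qed.

Lemma PN a : P a -> P (- a).
Proof.
move=> [s [hs ->]]; exists [seq (- pq.1, pq.2) | pq <- s]; split.
  rewrite all_map; apply/allP=> pq /(allP hs) /andP[h1 h2] /=.
  by rewrite aug_opp.
rewrite big_map -sumrN; apply: eq_bigr=> pq _ /=; by rewrite gmulNl.
Qed.

Lemma PB a b : P a -> P b -> P (a - b).
Proof. by move=> pa pb; apply: PD => //; apply: PN. Qed.

Lemma Pgen a b : aug_ideal G a -> aug_ideal H b -> P (gmul a b).
Proof. by move=> ha hb; exists [:: (a, b)]; rewrite /= ha hb big_seq1. Qed.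

Lemma Psum (I : Type) (r : seq I) (Q : pred I) F :
  (forall i, Q i -> P (F i)) -> P (\sum_(i <- r | Q i) F i).
Proof.
move=> hF; elim: r => [|i r IH]; first by rewrite big_nil; apply: P0.
rewrite big_cons; case: ifP => // qi; apply: PD => //; exact: hF.
Qed.

Lemma aug_gel (A : {group gT}) x : x \in A -> aug_ideal A (gel x - gel 1).
Proof.
move=> xA; apply/andP; split.
  apply/forallP=> y; apply/implyP=> yA; rewrite !ffunE.
  have -> : (y == x) = false by apply: contraNF yA => /eqP ->.
  have -> : (y == 1%g) = false by apply: contraNF yA => /eqP ->; apply: group1.
  by [].
under eq_bigr => y _ do rewrite ffunE [X in _ + X]ffunE.
rewrite sumrB.
have E z : \sum_y gel z y = 1.
  rewrite (bigD1 z) //= big1 => [|w /negbTE wz]; last by rewrite ffunE wz.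
  by rewrite ffunE eqxx addr0.
by rewrite !E subrr.
Qed.
End Ideal.



Lemma zmod_id2 (V : zmodType) (a b c d : V) :
  a + b + c - (b + d) = a + (c - d).
Proof. by rewrite opprD addrACA addrK. Qed.

Lemma zmod_id3 (V : zmodType) (v a b : V) :
  v - (a + b) = (v - b) - a.
Proof. by rewrite opprD [- a + _]addrC addrA. Qed.

Section Main.
Variable gT : finGroupType.
Variables G H : {group gT}.
Hypothesis sHG : H \subset G.
Let P := in_prod_ideal (aug_ideal G) (aug_ideal H).

Lemma Pprod (I : Type) (r : seq I) (Q : pred I) (f : I -> gT) :
  (forall i, Q i -> f i \in H) ->
  P (gel (\prod_(i <- r | Q i) f i)%g - gel 1 - \sum_(i <- r | Q i) (gel (f i) - gel 1)).
Proof.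
move=> hf; elim: r => [|i r IH]; first by rewrite !big_nil !subrr; apply: P0.
rewrite !big_cons; case: ifP => // qi.
rewrite gel_mulE zmod_id2; apply: PD => //; apply: Pgen.
  by apply: aug_gel; apply: (subsetP sHG); apply: hf.
apply: aug_gel; apply: group_prod => j qj; exact: hf.
Qed.
End Main.



Theorem lemma3p7 (gT : finGroupType) (G H : {group gT}) :
  (H <| G)%g -> (G^`(1) \subset H)%g -> (#|H| %| (#|G : H|)%g)%N ->
  forall X : {set gT}, is_transversal X (lcosets H G) G ->
  forall g : gT, g \in G ->
  in_prod_ideal (aug_ideal G) (aug_ideal H)
    ((gel (Ver X H g) - gel 1%g)
       - gmul (gel g - gel 1%g) (\sum_(x in X) gel x)).
Proof.
move=> nHG _ _ X trX g gG.
have sHG : H \subset G by case/andP: nHG.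
have sXG : X \subset G by case/and3P: trX.
pose r x := coset_rep X H (g * x)%g.
pose h x := ((r x)^-1 * (g * x))%g.
have BP x : x \in X -> ((g * x) *: H)%g \in lcosets H G.
  move=> xX; rewrite mem_lcosets mulGSid // groupM // (subsetP sXG) //.
have rX x : x \in X -> r x \in X.
  by move=> xX; rewrite /r /coset_rep; apply: (repr_mem_transversal trX 1%g (BP x xX)).
have rB x : x \in X -> r x \in ((g * x) *: H)%g.
  by move=> xX; rewrite /r /coset_rep; apply: (repr_mem_pblock trX 1%g (BP x xX)).
have hH x : x \in X -> h x \in H.
  move=> xX; have := rB x xX; rewrite mem_lcoset => k.
  by move: (groupVr k); rewrite invMg invgK.
have rh x : (r x * h x = g * x)%g by rewrite /h mulKVg.
have rinj : {in X &, injective r}.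
  move=> x y xX yX rxy.
  have k1 := rB x xX; have k2 := rB y yX.
  rewrite mem_lcoset rxy in k1; rewrite mem_lcoset in k2.
  have k : (x^-1 * y)%g \in H.
    have -> : (x^-1 * y = ((g * x)^-1 * r y) * ((g * y)^-1 * r y)^-1)%g.
      by rewrite !invMg !invgK !mulgA mulgK mulgKV.
    by rewrite groupM ?groupV.
  have xB : (x *: H)%g \in lcosets H G by rewrite mem_lcosets mulGSid // (subsetP sXG).
  have := setI_transversal_pblock trX 1%g xB.
  move=> E.
  have : x \in X :&: (x *: H)%g by rewrite inE xX lcoset_refl.
  have : y \in X :&: (x *: H)%g by rewrite inE yX mem_lcoset.
  by rewrite E => /set1P -> /set1P exy.
have rXX : (r @: X)%g = X.
  apply/eqP; rewrite eqEcard card_in_imset //; apply/andP; split; last exact: leqnn.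
  by apply/subsetP=> y /imsetP[x xX ->]; apply: rX.
have S1 : gmul (gel g - gel 1%g) (\sum_(x in X) gel x) =
    \sum_(x in X) gmul (gel (r x) - gel 1%g) (gel (h x) - gel 1%g)
    + \sum_(x in X) (gel (h x) - gel 1%g).
  rewrite gmul_sumr.
  rewrite (eq_bigr (fun x => gmul (gel (r x) - gel 1%g) (gel (h x) - gel 1%g)
       + (gel (h x) - gel 1%g) + (gel (r x) - gel x))); last first.
    move=> x _; rewrite gmulBl !gmul_gel mul1g -rh -gel_mulE2.
    by rewrite addrA subrK.
  have Er : \sum_(i in X) gel (r i) = \sum_(i in X) gel i.
    by rewrite -[in RHS]rXX big_imset.
  by rewrite big_split /= sumrB Er subrr addr0 big_split.
rewrite S1 zmod_id3; apply: PB.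
  have := @Pprod gT G H sHG _ (index_enum gT) (fun x => x \in X) h hH. by [].
apply: Psum => x xX; apply: Pgen; apply: aug_gel; last exact: hH.
by apply: (subsetP sXG); apply: rX.
Qed.
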